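(* Let $f:\mathbb{R}^2\times\mathbb{R}\to\mathbb{R}$ be continuously differentiable, and let $(a,b)\in\mathbb{R}^2\times\mathbb{R}$ satisfy $f(a,b)=0$ and $\partial_y f(a,b)\neq 0$. Let $U\subset\mathbb{R}^2$ be a closed rectangle (sides parallel to the coordinate axes) containing $a$ and $V\subset\mathbb{R}$ a closed bounded interval containing $b$, and let $g:U\to V$ be a function such that $f(x,g(x))=0$ for all $x\in U$. Assume that for each $x\in U$ the function $y\mapsto \mathrm{sign}(f(x,y))$ on $V$ is a single-step function, and that the constant $\rho\in\{1,-1\}$ is defined by: $\rho=1$ if these step functions are increasing in $y$, and $\rho=-1$ if they are decreasing (this is the same for all $x\in U$). For a subrectangle $R\subseteq U$ define $$\mu(R)=\int_{R\times V}\Theta(f(x,y))\,dx\,dy,$$ where $\Theta(t)=1$ for $t\ge 0$ and $\Theta(t)=0$ for $t<0$, and $dx\,dy$ is Lebesgue measure. Then for every subrectangle $R$ of $U$, $$\int_R g\,dx=|R|\,(\max V)^{\frac{\rho+1}{2}}(\min V)^{\frac{1-\rho}{2}}-\rho\,\mu(R),$$ where $|R|$ denotes the area of $R$ (and a factor raised to the exponent $0$ is read as $1$).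
   Context: All rectangles are parallel to the coordinate axes. The existence of $U$, $V$ and a unique continuously differentiable $g:U\to V$ with $f(x,g(x))=0$ is provided by the implicit function theorem; $f$ is regarded on $U\times V$. *)

(* Defs.v *)
From HB Require Import structures.
From mathcomp Require Import all_boot all_order all_algebra.
From mathcomp Require Import all_classical all_reals all_analysis.
Set Implicit Arguments. Unset Strict Implicit. Unset Printing Implicit Defensive.
Import Order.TTheory GRing.Theory Num.Theory.
Import numFieldNormedType.Exports.
Local Open Scope classical_set_scope.
Local Open Scope ring_scope.

Definition leb2 (R : realType) := ((lebesgue_measure (R:=R)) \x (lebesgue_measure (R:=R)))%E.
Definition leb3 (R : realType) := ((@leb2 R) \x (lebesgue_measure (R:=R)))%E.

Definition rect (R : realType) (r1 r2 r3 r4 : R) : set (R * R) :=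
  `[r1, r2]%classic `*` `[r3, r4]%classic.

Definition Theta (R : realType) (t : R) : R := if 0 <= t then 1 else 0.

Definition sign (R : realType) (t : R) : R := Num.sg t.

Definition single_step_incr (R : realType) (s : R -> R) (c d : R) : Prop :=
  exists t, c <= t <= d /\
    forall y, c <= y <= d -> (y < t -> s y = -1) /\ (t < y -> s y = 1).

Definition single_step_decr (R : realType) (s : R -> R) (c d : R) : Prop :=
  exists t, c <= t <= d /\
    forall y, c <= y <= d -> (y < t -> s y = 1) /\ (t < y -> s y = -1).

(* f : R^2 x R -> R is continuously differentiable: differentiable everywhere
   and all directional derivatives depend continuously on the point
   (equivalent to continuity of the total derivative in finite dimension). *)
Definition C1 (R : realType) (f : (R * R) * R -> R) : Prop :=
  (forall z, differentiable f z) /\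
  (forall v : (R * R) * R, continuous (fun z => 'D_v f z)).

(* Main.v *)
Require Import Defs.
From HB Require Import structures.
From mathcomp Require Import all_boot all_order all_algebra.
From mathcomp Require Import all_classical all_reals all_analysis.
From mathcomp Require Import measurable_realfun lra.
Import Order.TTheory GRing.Theory Num.Theory.
Import numFieldNormedType.Exports.
Local Open Scope classical_set_scope.
Local Open Scope ring_scope.

Lemma open_measurable2 (R : realType) (A : set (R * R)) : open A -> measurable A.
Proof.
move=> oA.
pose box (q1 q2 q3 : rat) : set (R * R) :=
  ball (ratr q1 : R) (ratr q3) `*` ball (ratr q2 : R) (ratr q3).
pose B q1 q2 q3 := if pselect (box q1 q2 q3 `<=` A) then box q1 q2 q3 else set0.
suff -> : A = \bigcup_q1 \bigcup_q2 \bigcup_q3 B q1 q2 q3.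
  apply: bigcupT_measurable_rat => q1; apply: bigcupT_measurable_rat => q2.
  apply: bigcupT_measurable_rat => q3; rewrite /B.
  case: pselect => H /=; last exact: measurable0.
  by apply: measurableX; rewrite ball_itv; exact: measurable_itv.
apply/seteqP; split; last first.
  by move=> x [q1 _ [q2 _ [q3 _]]]; rewrite /B; case: pselect => // H /H.
move=> x Ax.
have : nbhs x A by move: oA; rewrite openE => /(_ x Ax).
move=> /nbhs_ballP[e e0 beA].
have e20 : (0 : R) < e / 2 by rewrite divr_gt0.
have [r] := rat_in_itvoo e20; rewrite in_itv /= => /andP[r0 re].
have xr : x.1 - ratr r < x.1 + ratr r by rewrite ltrBDr -addrA ltrDl addr_gt0.
have xr2 : x.2 - ratr r < x.2 + ratr r by rewrite ltrBDr -addrA ltrDl addr_gt0.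
have [q1 q1x] := rat_in_itvoo xr.
have [q2 q2x] := rat_in_itvoo xr2.
have bq1 : ball (ratr q1 : R) (ratr r) x.1 by apply: ball_sym; rewrite ball_itv.
have bq2 : ball (ratr q2 : R) (ratr r) x.2 by apply: ball_sym; rewrite ball_itv.
exists q1 => //; exists q2 => //; exists r => //; rewrite /B.
case: pselect => H /=; first by split.
have rr : (ratr r : R) + ratr r <= e.
  by rewrite -mulr2n -mulr_natr -ler_pdivlMr // ltW.
exfalso; apply: H => y [/= y1 y2]; apply: beA; split => /=.
  exact: (le_ball rr (ball_triangle (ball_sym bq1) y1)).
exact: (le_ball rr (ball_triangle (ball_sym bq2) y2)).
Qed.
Lemma meas_g (R : realType) (D : set (R * R)) (g : R * R -> R) (h : R -> R * R -> R) (c d : R) :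
  measurable D -> (forall x, D x -> c <= g x <= d) -> (forall s, continuous (h s)) ->
  forall O : set R, open O ->
  (forall x s, D x -> c <= s <= d -> (s < g x <-> O (h s x))) -> measurable_fun D g.
Proof.
move=> mD gcd hc O oO hg; apply: (measurability _ (RGenOInfty.measurableE R)) => //.
move=> /= _ [_ [s ->] <-].
have [sc|cs] := ltP s c.
  rewrite (_ : D `&` g @^-1` `]s, +oo[%classic = D) //; apply/seteqP; split => x; first by case.
  move=> Dx; split => //; rewrite /= in_itv /= andbT.
  by have /andP[+ _] := gcd x Dx; apply: lt_le_trans.
have [ds|sd] := leP d s.
  rewrite (_ : D `&` g @^-1` `]s, +oo[%classic = set0) //; apply/seteqP; split => x //= [Dx].
  rewrite in_itv /= andbT => sg.
  by have /andP[_ gd] := gcd x Dx; have := lt_le_trans sg gd; rewrite ltNge ds.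
rewrite (_ : D `&` g @^-1` `]s, +oo[%classic = D `&` (h s @^-1` O)).
  apply: measurableI => //; apply: open_measurable2; apply: open_comp.
    by move=> x _; exact: hc.
  exact: oO.
apply/seteqP; split => x [Dx]; rewrite /= ?in_itv /= ?andbT => H; split => //.
  by apply/(hg x s Dx) => //; rewrite cs ltW.
by rewrite /= ?in_itv /= ?andbT; apply/(hg x s Dx) => //; rewrite cs ltW.
Qed.

Lemma int_section (R : realType) (S : set (R * R)) (c d : R) (lo hi : R * R -> R) :
  measurable S -> measurable_fun S lo -> measurable_fun S hi ->
  (forall x, S x -> c <= lo x /\ lo x <= hi x /\ hi x <= d) ->
  exists A : set ((R * R) * R), measurable A /\
    (forall z, (S `*` `[c, d]%classic) z -> (A z <-> lo z.1 <= z.2 <= hi z.1)) /\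
    (\int[@leb3 R]_(z in S `*` `[c, d]%classic) (\1_A z)%:E
     = \int[@leb2 R]_(x in S) ((hi x)%:E - (lo x)%:E))%E.
Proof.
move=> mS mlo mhi hS.
set D' := S `*` `[c, d]%classic.
have mD' : measurable D' by apply: measurableX => //; exact: measurable_itv.
have mfst : measurable_fun D' fst by exact: measurable_funS (@measurable_fst _ _ _ _).
have msnd : measurable_fun D' snd by exact: measurable_funS (@measurable_snd _ _ _ _).
have fstS : fst @` D' `<=` S by move=> _ [z [zS _] <-].
have mlo' : measurable_fun D' (lo \o fst) by exact: measurable_comp mS fstS mlo mfst.
have mhi' : measurable_fun D' (hi \o fst) by exact: measurable_comp mS fstS mhi mfst.
pose A := (D' `&` [set z | lo z.1 <= z.2]) `&` (D' `&` [set z | z.2 <= hi z.1]).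
have mA : measurable A.
  apply: measurableI.
    exact: (measurable_fun_ler mlo' msnd mD' (Y := [set true])).
  exact: (measurable_fun_ler msnd mhi' mD' (Y := [set true])).
exists A; split => //; split.
  move=> z Dz; rewrite /A; split; first by move=> [[_ ->] [_ ->]].
  by move=> /andP[h1 h2].
rewrite integral_indic // setIidl; last by move=> z [[]].
transitivity (\int[@leb2 R]_x (lebesgue_measure (xsection A x)))%E; first by [].
rewrite [RHS]integral_mkcond /=.
apply: eq_integral => x _; rewrite /patch; case: ifPn => [/set_mem xS|xS].
  have [h1 [h2 h3]] := hS x xS.
  rewrite (_ : xsection A x = `[lo x, hi x]%classic).
    rewrite lebesgue_measure_itv /= lte_fin; case: ltgtP h2 => // -> _.
    by rewrite subee.
  apply/seteqP; split => y; rewrite /xsection /= inE /A /=.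
    by move=> [[_ l1] [_ l2]]; rewrite in_itv /= l1 l2.
  rewrite in_itv /= => /andP[y1 y2].
  have Dy : D' (x, y) by split => //=; rewrite in_itv /= (le_trans h1 y1) (le_trans y2 h3).
  by split; split.
rewrite (_ : xsection A x = set0) ?measure0 //.
apply/seteqP; split => y //; rewrite /xsection /= inE /A /= => -[[[]]].
by move=> /= xS'; move: xS; rewrite notin_setE.
Qed.

Lemma norm_between (R : realType) (c d y : R) : c <= y <= d -> `|y| <= `|c| + `|d|.
Proof.
move=> /andP[h1 h2]; rewrite ler_norml.
have /andP[hc1 _] : - `|c| <= c <= `|c| by rewrite -ler_norml.
have /andP[_ hd2] : - `|d| <= d <= `|d| by rewrite -ler_norml.
have := normr_ge0 c; have := normr_ge0 d => *; apply/andP; split; lra.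
Qed.


Lemma sg_m1 (R : realType) (x : R) : Num.sg x = -1 -> x < 0.
Proof.
case: sgrP => // _ /eqP; first by rewrite eq_sym oppr_eq0 oner_eq0.
by move=> /eqP; lra.
Qed.
Lemma sg_1 (R : realType) (x : R) : Num.sg x = 1 -> 0 < x.
Proof.
case: sgrP => // _ /eqP; first by rewrite eq_sym oner_eq0.
by move=> /eqP; lra.
Qed.
Lemma incr_char (R : realType) (h : R -> R) (c d gx : R) :
  single_step_incr (fun y => sign (h y)) c d -> c <= gx <= d -> h gx = 0 ->
  forall y, c <= y <= d -> (h y < 0 <-> y < gx) /\ (0 < h y <-> gx < y).
Proof.
move=> [t [tcd ht]] gcd h0.
have gt : gx = t.
  have [h1 h2] := ht gx gcd; rewrite /sign h0 sgr0 in h1 h2.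
  case: (ltgtP gx t) => // [/h1|/h2] /eqP.
    by rewrite eq_sym oppr_eq0 oner_eq0.
  by rewrite eq_sym oner_eq0.
subst t => y ycd; have [h1 h2] := ht y ycd.
split; split.
- move=> hy; case: (ltgtP y gx) => // [/h2/sg_1|yg]; first by rewrite ltNge ltW.
  by move: hy; rewrite yg h0 ltxx.
- by move/h1/sg_m1.
- move=> hy; case: (ltgtP y gx) => // [/h1/sg_m1|yg]; first by rewrite ltNge ltW.
  by move: hy; rewrite yg h0 ltxx.
- by move/h2/sg_1.
Qed.
Lemma decr_incr (R : realType) (h : R -> R) (c d : R) :
  single_step_decr (fun y => sign (h y)) c d -> single_step_incr (fun y => sign (- h y)) c d.
Proof.
move=> [t [tcd ht]]; exists t; split => // y ycd; have [h1 h2] := ht y ycd.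
by rewrite /sign sgrN; split => [/h1|/h2]; rewrite /sign => ->; rewrite ?opprK.
Qed.


Theorem lemma1 (R : realType) (f : (R * R) * R -> R) (a : R * R) (b : R)
  (u1 u2 u3 u4 : R) (c d : R) (g : R * R -> R) (rho : int) :
  C1 f ->
  f (a, b) = 0 ->
  'D_((0, 0), 1) f (a, b) != 0 ->
  u1 < u2 -> u3 < u4 -> c < d ->
  rect u1 u2 u3 u4 a ->
  c <= b <= d ->
  (forall x, rect u1 u2 u3 u4 x -> c <= g x <= d) ->
  (forall x, rect u1 u2 u3 u4 x -> f (x, g x) = 0) ->
  ((rho = 1 /\ forall x, rect u1 u2 u3 u4 x ->
                 single_step_incr (fun y => sign (f (x, y))) c d) \/
   (rho = -1 /\ forall x, rect u1 u2 u3 u4 x ->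
                 single_step_decr (fun y => sign (f (x, y))) c d)) ->
  forall r1 r2 r3 r4 : R,
    r1 <= r2 -> r3 <= r4 ->
    rect r1 r2 r3 r4 `<=` rect u1 u2 u3 u4 ->
    (\int[@leb2 R]_(x in rect r1 r2 r3 r4) (g x)%:E
     = ((r2 - r1) * (r4 - r3) * (d ^ ((rho + 1) %/ 2)%Z) * (c ^ ((1 - rho) %/ 2)%Z))%:E
       - (rho%:~R)%:E
         * \int[@leb3 R]_(z in rect r1 r2 r3 r4 `*` `[c, d]%classic) (Theta (f z))%:E)%E.
Proof.
move=> [dif _] fab _ u12 u34 cd aD bcd gcd fg0 hrho r1 r2 r3 r4 r12 r34 SD.
set D := rect u1 u2 u3 u4 in aD gcd fg0 hrho SD *.
set S := rect r1 r2 r3 r4 in SD *.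
have mS : measurable S by apply: measurableX; exact: measurable_itv.
have fc : continuous f by move=> z; apply: differentiable_continuous; exact: dif.
have hc : forall s, continuous (fun x => f (x, s)).
  move=> s x; apply: (@continuous_comp _ _ _ (fun x => (x, s)) f).
    move=> A /nbhs_ballP[e e0 He]; apply/nbhs_ballP; exists e => // y bxy.
    by apply: He; split => //=; exact: ballxx.
  exact: fc.
have gS x : S x -> c <= g x <= d by move=> /SD /gcd.
have leb_cc (p q : R) : p <= q -> lebesgue_measure (`[p, q]%classic : set R) = (q - p)%:E.
  move=> pq; rewrite lebesgue_measure_itv /= lte_fin.
  by case: ltgtP pq => // -> _; rewrite subrr.
have lebS : @leb2 R S = ((r2 - r1) * (r4 - r3))%:E.
  rewrite /leb2 product_measure1E; try exact: measurable_itv.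
  by rewrite EFinM -(leb_cc _ _ r12) -(leb_cc _ _ r34).
have bdd : [bounded g x | x in S].
  apply: filterS (nbhs_pinfty_ge (num_real (`|c| + `|d|))) => M HM x Sx.
  exact: (le_trans (@norm_between _ _ _ _ (gS x Sx)) HM).
have Dsub x : S x -> D x by move/SD.
have mcst (k : R) : measurable_fun S (fun _ => k) by exact: measurable_cst.
have bcst (k : R) : [bounded k | x in S].
  apply: filterS (nbhs_pinfty_ge (num_real `|k|)) => M HM x Sx /=.
  exact: HM.
have Sfin : (@leb2 R S < +oo)%E by rewrite lebS ltry.
have ic (k : R) : (@leb2 R).-integrable S (EFin \o (fun _ => k)).
  exact: measurable_bounded_integrable.
have intc (k : R) : (\int[@leb2 R]_(x in S) k%:E = (k * ((r2 - r1) * (r4 - r3)))%:E)%E.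
  by rewrite integral_cst // EFinM -lebS.
case: hrho => [[-> hinc] | [-> hdec]].
- have key x y : S x -> c <= y <= d -> (f (x, y) < 0 <-> y < g x) /\ (0 < f (x, y) <-> g x < y).
    move=> Sx; apply: (@incr_char _ (fun y => f (x, y))); first exact: hinc (Dsub x Sx).
      exact: gS.
    exact: fg0 (Dsub x Sx).
  have mg : measurable_fun S g.
    apply: (@meas_g R S g (fun s x => f (x, s)) c d mS gS hc `]-oo, 0[%classic).
      exact: interval_open.
    move=> x s Sx scd; rewrite /= in_itv /=; split => [/(key x s Sx scd).1 -> //|].
    by move/(key x s Sx scd).1.
  have ig : (@leb2 R).-integrable S (EFin \o g) by exact: measurable_bounded_integrable.
  have [A [mA [HA Hint]]] := @int_section R S c d g (fun _ => d) mS mg (mcst d)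
    (fun x Sx => let: conj h1 h2 := andP (gS x Sx) in conj h1 (conj h2 (lexx d))).
  rewrite (_ : (\int[@leb3 R]_(z in S `*` `[c, d]%classic) (Theta (f z))%:E)%E
             = \int[@leb3 R]_(z in S `*` `[c, d]%classic) (\1_A z)%:E)%E; last first.
    apply: eq_integral => -[x y] /set_mem Dz; rewrite indicE /Theta.
    have [xS ycd] := Dz; rewrite /= in_itv /= in ycd.
    have [k1 _] := key x y xS ycd.
    case: ifPn => hf.
      rewrite mem_set //; apply/(HA _ Dz) => /=; rewrite (andP ycd).2 andbT.
      by rewrite leNgt; apply/negP => /k1; rewrite ltNge hf.
    rewrite memNset //; move/(HA _ Dz) => /= /andP[gy _].
    by move: hf; rewrite -ltNge => /k1; rewrite ltNge gy.
  rewrite Hint.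
  rewrite integralB_EFin // intc.
  have gfin : (\int[@leb2 R]_(x in S) (g x)%:E)%E \is a fin_num.
    apply: integrable_fin_num => //.
    all: try by apply: measurableX; exact: measurable_itv.
  rewrite -(fineK gfin).
  rewrite (_ : ((1 + 1) %/ 2)%Z = 1) // (_ : ((1 - 1) %/ 2)%Z = 0) // expr1z expr0z.
  set I := fine _.
  apply: (@eq_trans _ _ ((((r2 - r1) * (r4 - r3) * d * 1) - 1%:~R * (d * ((r2 - r1) * (r4 - r3)) - I))%:E)); last by [].
  congr EFin; rewrite mulr1 mul1r; lra.
have key x y : S x -> c <= y <= d ->
    (- f (x, y) < 0 <-> y < g x) /\ (0 < - f (x, y) <-> g x < y).
  move=> Sx; apply: (@incr_char _ (fun y => - f (x, y))).
  - exact: decr_incr (hdec x (Dsub x Sx)).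
  - exact: gS.
  - by rewrite /= fg0 ?oppr0 //; exact: Dsub.
have mg : measurable_fun S g.
  apply: (@meas_g R S g (fun s x => f (x, s)) c d mS gS hc `]0, +oo[%classic).
    exact: interval_open.
  move=> x s Sx scd; rewrite /= in_itv /= andbT -oppr_lt0.
  by case: (key x s Sx scd) => [[h1 h2] _]; split.
have ig : (@leb2 R).-integrable S (EFin \o g) by exact: measurable_bounded_integrable.
have [A [mA [HA Hint]]] := @int_section R S c d (fun _ => c) g mS (mcst c) mg
  (fun x Sx => let: conj h1 h2 := andP (gS x Sx) in conj (lexx c) (conj h1 h2)).
rewrite (_ : (\int[@leb3 R]_(z in S `*` `[c, d]%classic) (Theta (f z))%:E)%E
           = \int[@leb3 R]_(z in S `*` `[c, d]%classic) (\1_A z)%:E)%E; last first.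
  apply: eq_integral => -[x y] /set_mem Dz; rewrite indicE /Theta.
  have [xS ycd] := Dz; rewrite /= in_itv /= in ycd.
  have [_ k2] := key x y xS ycd.
  case: ifPn => hf.
    rewrite mem_set //; apply/(HA _ Dz) => /=; rewrite (andP ycd).1 /=.
    by rewrite leNgt; apply/negP => /k2; rewrite oppr_gt0 ltNge hf.
  rewrite memNset //; move/(HA _ Dz) => /= /andP[_ yg].
  by move: hf; rewrite -ltNge -oppr_gt0 => /k2; rewrite ltNge yg.
rewrite Hint.
rewrite integralB_EFin // intc.
have gfin : (\int[@leb2 R]_(x in S) (g x)%:E)%E \is a fin_num.
  apply: integrable_fin_num => //.
  all: try by apply: measurableX; exact: measurable_itv.
rewrite -(fineK gfin).
rewrite (_ : ((-1 + 1) %/ 2)%Z = 0) // (_ : ((1 - -1) %/ 2)%Z = 1) // expr1z expr0z.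
set I := fine _.
apply: (@eq_trans _ _ ((((r2 - r1) * (r4 - r3) * 1 * c) - (-1)%:~R * (I - c * ((r2 - r1) * (r4 - r3))))%:E)); last by [].
congr EFin; rewrite mulr1 (_ : (-1)%:~R = -1 :> R) //; lra.
Qed.
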